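(* Let $n\ge2$, $s\in(0,1)$, $r>0$ and $s_1\in(0,2s)$. Then for all $x,y\in\mathbb{B}_r$ with $x\neq y$, $$G_{\mathbb{B}_r}(x,y)\le C_4(n,s)\,(d(x))^{s}\,\frac{(d(y))^{s-s_1}}{|x-y|^{\,n-s_1}},$$ where $C_4(n,s)=\pi^{-n/2}\Gamma(s)^{-1}\max\left\{\dfrac{2^{2s}\Gamma(\frac n2)}{\Gamma(1+s)},\ \Gamma\!\left(\tfrac n2-s\right)\right\}$.
   Context: $\mathbb{B}_r=\{x\in\mathbb{R}^n:|x|<r\}$, $d(x)=r-|x|$. The Green function of the fractional Laplacian $(-\Delta)^s$ on $\mathbb{B}_r$ (for $n\ge2$) is $$G_{\mathbb{B}_r}(x,y)=\kappa(n,s)\,|x-y|^{2s-n}\int_0^{r^*(x,y)}\frac{t^{s-1}}{(t+1)^{n/2}}\,dt,\qquad r^*(x,y)=\frac{(r^2-|x|^2)(r^2-|y|^2)}{r^2|x-y|^2},$$ with $\kappa(n,s)=\dfrac{\Gamma(\frac n2)}{2^{2s}\pi^{n/2}\Gamma(s)^2}$. *)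

(* Defs.v *)
From Stdlib Require Import Reals List.
From Coquelicot Require Import Coquelicot.
Import ListNotations.
Open Scope R_scope.

(* Points of R^n are lists of reals of length n. *)
Definition vnorm (x : list R) : R := sqrt (fold_right (fun a acc => a * a + acc) 0 x).
Definition vsub (x y : list R) : list R := map (fun p => fst p - snd p) (combine x y).

Definition Gamma (a : R) : R :=
  RInt_gen (fun t => Rpower t (a - 1) * exp (- t)) (at_right 0) (Rbar_locally p_infty).

Definition kappa (n : nat) (s : R) : R :=
  Gamma (INR n / 2) / (Rpower 2 (2 * s) * Rpower PI (INR n / 2) * (Gamma s) ^ 2).

Definition rstar (r : R) (x y : list R) : R :=
  (r ^ 2 - vnorm x ^ 2) * (r ^ 2 - vnorm y ^ 2) / (r ^ 2 * vnorm (vsub x y) ^ 2).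

Definition green_ball (n : nat) (s r : R) (x y : list R) : R :=
  kappa n s * Rpower (vnorm (vsub x y)) (2 * s - INR n) *
  RInt_gen (fun t => Rpower t (s - 1) / Rpower (t + 1) (INR n / 2))
           (at_right 0) (at_point (rstar r x y)).

Definition C4 (n : nat) (s : R) : R :=
  / Rpower PI (INR n / 2) / Gamma s *
  Rmax (Rpower 2 (2 * s) * Gamma (INR n / 2) / Gamma (1 + s)) (Gamma (INR n / 2 - s)).

(* Main.v *)
Require Import Defs.
From Stdlib Require Import Reals List Lra Psatz Classical.
From Coquelicot Require Import Coquelicot.
Open Scope R_scope.

Lemma Rpow_pos x a : 0 < Rpower x a.
Proof. unfold Rpower; apply exp_pos. Qed.

Lemma Rpow_deriv x a : 0 < x -> is_derive (fun t => Rpower t a) x (a * Rpower x (a - 1)).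
Proof. intros Hx; apply is_derive_Reals, derivable_pt_lim_power; auto. Qed.

Lemma Rpow_cont x a : 0 < x -> continuous (fun t => Rpower t a) x.
Proof. intros Hx; apply (@ex_derive_continuous R_AbsRing R_NormedModule); eexists; apply Rpow_deriv; auto. Qed.

Lemma ex_RInt_pos (g : R -> R) a b : 0 < a -> a <= b -> (forall t, 0 < t -> continuous g t) -> ex_RInt g a b.
Proof.
  intros Ha Hab Hc; apply (@ex_RInt_continuous R_CompleteNormedModule); intros z Hz; apply Hc.
  rewrite Rmin_left in Hz; lra.
Qed.

Lemma is_RInt_pow a b p : 0 < a -> a <= b -> p <> 0 ->
  is_RInt (fun t => Rpower t (p - 1)) a b ((Rpower b p - Rpower a p) / p).
Proof.
  intros Ha Hab Hp.
  assert (H := @is_RInt_derive R_CompleteNormedModule (fun t => / p * Rpower t p) (fun t => Rpower t (p - 1)) a b).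
  replace ((Rpower b p - Rpower a p) / p) with (minus (/ p * Rpower b p) (/ p * Rpower a p)).
  2:{ unfold minus, plus, opp; simpl. field; auto. }
  apply H.
  - intros x Hx. rewrite Rmin_left, Rmax_right in Hx by lra.
    replace (Rpower x (p - 1)) with (/ p * (p * Rpower x (p - 1))) by (field; auto).
    apply (is_derive_scal (fun t => Rpower t p)). apply Rpow_deriv; lra.
  - intros x Hx. rewrite Rmin_left, Rmax_right in Hx by lra. apply Rpow_cont; lra.
Qed.

Lemma RInt_pow a b p : 0 < a -> a <= b -> p <> 0 ->
  RInt (fun t => Rpower t (p - 1)) a b = (Rpower b p - Rpower a p) / p.
Proof. intros; apply is_RInt_unique, is_RInt_pow; auto. Qed.

Section Impr.
Variable g : R -> R.
Hypothesis Hc : forall t, 0 < t -> continuous g t.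
Hypothesis Hp : forall t, 0 < t -> 0 <= g t.

Lemma exg a b : 0 < a -> a <= b -> ex_RInt g a b.
Proof. intros; apply ex_RInt_pos; auto. Qed.

Lemma RInt_nonneg a b : 0 < a -> a <= b -> 0 <= RInt g a b.
Proof. intros; apply RInt_ge_0; auto. apply exg; auto. intros; apply Hp; lra. Qed.

Lemma RInt_split a b c : 0 < a -> a <= b -> b <= c -> RInt g a c = RInt g a b + RInt g b c.
Proof.
  intros. rewrite <- (RInt_Chasles g a b c); auto; apply exg; lra.
Qed.

Lemma RInt_mono_dom a a' b b' : 0 < a' -> a' <= a -> a <= b -> b <= b' ->
  RInt g a b <= RInt g a' b'.
Proof.
  intros. rewrite (RInt_split a' a b'), (RInt_split a b b') by lra.
  assert (0 <= RInt g a' a) by (apply RInt_nonneg; lra).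
  assert (0 <= RInt g b b') by (apply RInt_nonneg; lra). lra.
Qed.

Lemma ball_R (l e y : R) : Rabs (y - l) < e -> ball l e y.
Proof. intros H; unfold ball; simpl; unfold AbsRing_ball, abs, minus, plus, opp; simpl. exact H. Qed.

Lemma improper_inf K : (forall a b, 0 < a -> a <= b -> RInt g a b <= K) ->
  exists L, is_RInt_gen g (at_right 0) (Rbar_locally p_infty) L /\
    (forall a b, 0 < a -> a <= b -> RInt g a b <= L) /\
    (forall K', (forall a b, 0 < a -> a <= b -> RInt g a b <= K') -> L <= K').
Proof.
  intros HK.
  set (E := fun y => exists a b, 0 < a /\ a <= b /\ y = RInt g a b).
  destruct (completeness E) as [L [HL1 HL2]].
  { exists K; intros y [a [b [? [? ->]]]]; auto. }
  { exists (RInt g 1 1); exists 1, 1; repeat split; lra. }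
  assert (Hup : forall a b, 0 < a -> a <= b -> RInt g a b <= L).
  { intros a b Ha Hab; apply HL1; exists a, b; auto. }
  exists L; split; [|split]; auto.
  2:{ intros K' HK'; apply HL2; intros y [a [b [? [? ->]]]]; auto. }
  intros P [eps HP].
  destruct (classic (exists a b, 0 < a /\ a <= b /\ L - eps < RInt g a b)) as [[a0 [b0 [Ha0 [Hab0 Hlt]]]]|Hn].
  2:{ exfalso. assert (L <= L - eps). { apply HL2; intros y [a [b [? [? ->]]]].
        destruct (Rle_lt_dec (RInt g a b) (L - eps)); auto. exfalso; apply Hn; exists a, b; auto. }
      destruct eps; simpl in *; lra. }
  apply Filter_prod with (fun a => 0 < a < a0) (fun b => b0 < b).
  - exists (mkposreal a0 Ha0). intros y Hy Hy0. unfold ball in Hy; simpl in Hy; unfold AbsRing_ball, abs, minus, plus, opp in Hy; simpl in Hy.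
    apply Rabs_def2 in Hy. lra.
  - exists b0; auto.
  - intros a b [Ha Ha'] Hb. exists (RInt g a b); split.
    + apply (@RInt_correct R_CompleteNormedModule), exg; lra.
    + apply HP, ball_R. assert (RInt g a0 b0 <= RInt g a b) by (apply RInt_mono_dom; lra).
      assert (RInt g a b <= L) by (apply Hup; lra). apply Rabs_def1; lra.
Qed.

Lemma improper_pt R0 K : 0 < R0 -> (forall a, 0 < a -> a <= R0 -> RInt g a R0 <= K) ->
  exists L, is_RInt_gen g (at_right 0) (at_point R0) L /\
    (forall a, 0 < a -> a <= R0 -> RInt g a R0 <= L) /\
    (forall K', (forall a, 0 < a -> a <= R0 -> RInt g a R0 <= K') -> L <= K').
Proof.
  intros HR HK.
  set (E := fun y => exists a, 0 < a /\ a <= R0 /\ y = RInt g a R0).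
  destruct (completeness E) as [L [HL1 HL2]].
  { exists K; intros y [a [? [? ->]]]; auto. }
  { exists (RInt g R0 R0); exists R0; repeat split; lra. }
  assert (Hup : forall a, 0 < a -> a <= R0 -> RInt g a R0 <= L).
  { intros a Ha Hab; apply HL1; exists a; auto. }
  exists L; split; [|split]; auto.
  2:{ intros K' HK'; apply HL2; intros y [a [? [? ->]]]; auto. }
  intros P [eps HP].
  destruct (classic (exists a, 0 < a /\ a <= R0 /\ L - eps < RInt g a R0)) as [[a0 [Ha0 [Hab0 Hlt]]]|Hn].
  2:{ exfalso. assert (L <= L - eps). { apply HL2; intros y [a [? [? ->]]].
        destruct (Rle_lt_dec (RInt g a R0) (L - eps)); auto. exfalso; apply Hn; exists a; auto. }
      destruct eps; simpl in *; lra. }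
  apply Filter_prod with (fun a => 0 < a < a0) (fun b => b = R0).
  - exists (mkposreal a0 Ha0). intros y Hy Hy0. unfold ball in Hy; simpl in Hy; unfold AbsRing_ball, abs, minus, plus, opp in Hy; simpl in Hy.
    apply Rabs_def2 in Hy. lra.
  - reflexivity.
  - intros a b [Ha Ha'] Hb. simpl. subst b. exists (RInt g a R0); split.
    + apply (@RInt_correct R_CompleteNormedModule), exg; lra.
    + apply HP, ball_R. assert (RInt g a0 R0 <= RInt g a R0) by (apply RInt_mono_dom; lra).
      assert (RInt g a R0 <= L) by (apply Hup; lra). apply Rabs_def1; lra.
Qed.
End Impr.

Lemma cpt_Rpow x a : 0 < x -> continuity_pt (fun t => Rpower t a) x.
Proof. intros; apply continuity_pt_filterlim, Rpow_cont; auto. Qed.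

Lemma cpt_expo (f : R -> R) x : continuity_pt f x -> continuity_pt (fun t => exp (f t)) x.
Proof. intros H. apply (continuity_pt_comp f exp); auto. apply derivable_continuous_pt, derivable_pt_exp. Qed.

Lemma Rpower_m1 x : 0 < x -> Rpower x (-1) = / x.
Proof. intros; replace (-1) with (- (1)) by ring; rewrite Rpower_Ropp, Rpower_1; auto. Qed.

Definition gf (a t : R) := Rpower t (a - 1) * exp (- t).

Lemma gf_cont a t : 0 < t -> continuous (gf a) t.
Proof.
  intros Ht. apply continuity_pt_filterlim. unfold gf.
  apply continuity_pt_mult. apply cpt_Rpow; auto.
  apply cpt_expo. apply continuity_pt_opp, continuity_pt_id.
Qed.

Lemma gf_nonneg a t : 0 <= gf a t.
Proof. unfold gf. pose proof (Rpow_pos t (a-1)); pose proof (exp_pos (-t)); nra. Qed.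

Lemma exp_le1 t : 0 <= t -> exp (- t) <= 1.
Proof. intros. rewrite <- exp_0. destruct (Req_dec t 0). subst; rewrite Ropp_0; lra.
  left; apply exp_increasing; lra. Qed.

Lemma gf_head a t : 0 < t -> gf a t <= Rpower t (a - 1).
Proof. intros. unfold gf. pose proof (Rpow_pos t (a-1)). pose proof (exp_le1 t). nra. Qed.

Definition Mc (a : R) := Rpower (a + 1) (a + 1).

Lemma Rpower_exp u k : Rpower (exp u) k = exp (k * u).
Proof. unfold Rpower. rewrite ln_exp. reflexivity. Qed.

Lemma gf_tail a t : 0 < a -> 0 < t -> gf a t <= Mc a * Rpower t (-1 - 1).
Proof.
  intros Ha Ht. set (k := a + 1).
  assert (Hk : 0 < k) by (unfold k; lra).
  assert (E : gf a t = Rpower (t * exp (- t / k)) k * Rpower t (-1 - 1)).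
  { unfold gf. rewrite <- Rpower_mult_distr by (auto; apply exp_pos).
    rewrite Rpower_exp. replace (k * (- t / k)) with (- t) by (field; lra).
    replace (Rpower t (a - 1)) with (Rpower t (k + (-1 - 1))).
    2:{ f_equal; unfold k; ring. }
    rewrite Rpower_plus. ring. }
  rewrite E. unfold Mc. fold k. apply Rmult_le_compat_r. left; apply Rpow_pos.
  apply Rle_Rpower_l. lra. split. apply Rmult_lt_0_compat; auto; apply exp_pos.
  assert (H1 := exp_ineq1_le (t / k)).
  assert (H2 : exp (- t / k) * exp (t / k) = 1).
  { rewrite <- exp_plus. replace (- t / k + t / k) with 0 by (field; lra). apply exp_0. }
  assert (0 < exp (- t / k)) by apply exp_pos.
  assert (t / k <= exp (t / k)) by lra.
  set (u := t / k) in *. set (E1 := exp (- t / k)) in *. set (E2 := exp u) in *.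
  replace t with (k * u) by (unfold u; field; lra).
  assert (k * u * E1 <= k * E2 * E1).
  { apply Rmult_le_compat_r; [lra|]. apply Rmult_le_compat_l; lra. }
  nra.
Qed.

Lemma gf_int_bound c A B a b : 0 < c -> 0 < A -> A <= B -> 1 <= B -> 0 < a -> a <= b ->
  RInt (gf c) a b <= Rpower A c / c + RInt (gf c) A B + Mc c / B.
Proof.
  intros Hc HA HAB HB Ha Hab.
  set (a' := Rmin a A). set (b' := Rmax b B).
  assert (Ha' : 0 < a') by (unfold a'; apply Rmin_glb_lt; lra).
  assert (a' <= a) by apply Rmin_l. assert (a' <= A) by apply Rmin_r.
  assert (b <= b') by apply Rmax_l. assert (B <= b') by apply Rmax_r.
  assert (Hcont : forall t, 0 < t -> continuous (gf c) t) by (intros; apply gf_cont; auto).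
  assert (Hnn : forall t, 0 < t -> 0 <= gf c t) by (intros; apply gf_nonneg).
  apply Rle_trans with (RInt (gf c) a' b').
  { apply RInt_mono_dom; auto; lra. }
  rewrite (RInt_split _ Hcont a' A b') by lra.
  rewrite (RInt_split _ Hcont A B b') by lra.
  assert (K1 : RInt (gf c) a' A <= Rpower A c / c).
  { apply Rle_trans with (RInt (fun t => Rpower t (c - 1)) a' A).
    apply RInt_le; auto. apply (exg _ Hcont); auto. apply ex_RInt_pos; auto. intros; apply Rpow_cont; auto.
    intros; apply gf_head; lra.
    rewrite RInt_pow by lra. pose proof (Rpow_pos a' c). apply Rmult_le_compat_r.
    left; apply Rinv_0_lt_compat; auto. lra. }
  assert (K3 : RInt (gf c) B b' <= Mc c / B).
  { apply Rle_trans with (RInt (fun t => Mc c * Rpower t (-1 - 1)) B b').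
    apply RInt_le; auto. apply (exg _ Hcont); lra. apply ex_RInt_pos; try lra.
    intros; apply continuity_pt_filterlim, continuity_pt_mult. apply continuity_pt_const; intros ? ?; auto. apply cpt_Rpow; auto.
    intros; apply gf_tail; lra.
    rewrite (is_RInt_unique (fun t => Mc c * Rpower t (-1 - 1)) B b' (Mc c * ((Rpower b' (-1) - Rpower B (-1)) / (-1)))).
    2:{ apply (@is_RInt_scal R_NormedModule (fun t => Rpower t (-1 - 1))). apply is_RInt_pow; lra. }
    rewrite !Rpower_m1 by lra.
    assert (0 < Mc c) by apply Rpow_pos.
    assert (/ b' <= / B) by (apply Rinv_le_contravar; lra).
    assert (0 < / b') by (apply Rinv_0_lt_compat; lra).
    unfold Rdiv. nra. }
  lra.
Qed.

Lemma Gamma_gf a : Gamma a = RInt_gen (gf a) (at_right 0) (Rbar_locally p_infty).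
Proof. reflexivity. Qed.

Lemma Gamma_spec a : 0 < a ->
  (forall a0 b0, 0 < a0 -> a0 <= b0 -> RInt (gf a) a0 b0 <= Gamma a) /\
  (forall K', (forall a0 b0, 0 < a0 -> a0 <= b0 -> RInt (gf a) a0 b0 <= K') -> Gamma a <= K').
Proof.
  intros Ha.
  assert (Hcont : forall t, 0 < t -> continuous (gf a) t) by (intros; apply gf_cont; auto).
  assert (Hnn : forall t, 0 < t -> 0 <= gf a t) by (intros; apply gf_nonneg).
  destruct (improper_inf (gf a) Hcont Hnn (Rpower 1 a / a + RInt (gf a) 1 1 + Mc a / 1)) as [L [HL [H1 H2]]].
  { intros; apply gf_int_bound; lra. }
  rewrite Gamma_gf.
  rewrite (@is_RInt_gen_unique R_CompleteNormedModule (at_right 0) (Rbar_locally p_infty) (Proper_StrongProper _ (at_right_proper_filter 0)) (Proper_StrongProper _ (Rbar_locally_filter p_infty)) (gf a) L HL).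
  split; auto.
Qed.

Lemma Gamma_pos a : 0 < a -> 0 < Gamma a.
Proof.
  intros Ha. destruct (Gamma_spec a Ha) as [H1 _].
  apply Rlt_le_trans with (RInt (gf a) 1 2); [|apply H1; lra].
  apply RInt_gt_0; [lra| |].
  - intros x Hx. unfold gf. pose proof (Rpow_pos x (a-1)); pose proof (exp_pos (-x)). nra.
  - intros; apply gf_cont; lra.
Qed.

Lemma is_derive_expm x : is_derive (fun t => exp (- t)) x (- exp (- x)).
Proof. auto_derive; auto; ring. Qed.

Lemma Gamma_rec_le s : 0 < s -> Gamma (1 + s) <= s * Gamma s.
Proof.
  intros Hs.
  destruct (Gamma_spec s Hs) as [G1 _].
  destruct (Gamma_spec (1 + s) ltac:(lra)) as [_ G2].
  assert (Hint : forall a b, 0 < a -> a <= b -> RInt (gf (1 + s)) a b <= Rpower a s + s * Gamma s).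
  { intros a b Ha Hab.
    set (F := fun t => - Rpower t s * exp (- t)).
    assert (HI : is_RInt (fun t => Rpower t s * exp (- t) - s * gf s t) a b (minus (F b) (F a))).
    { apply (@is_RInt_derive R_CompleteNormedModule F).
      - intros x Hx. rewrite Rmin_left, Rmax_right in Hx by lra.
        unfold F. 
        assert (D1 := Rpow_deriv x s ltac:(lra)).
        assert (D2 := is_derive_expm x).
        assert (D := @is_derive_mult R_AbsRing (fun t => - Rpower t s) (fun t => exp (- t)) x _ _
                       (@is_derive_opp R_AbsRing R_NormedModule (fun t => Rpower t s) x _ D1) D2 ltac:(intros; apply Rmult_comm)).
        assert (E : Rpower x s * exp (- x) - s * gf s x = plus (mult (opp (s * Rpower x (s - 1))) (exp (- x))) (mult (- Rpower x s) (- exp (- x)))).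
        { unfold gf, plus, mult, opp; simpl. ring. }
        rewrite E. eapply is_derive_ext; [| exact D]. intros; reflexivity.
      - intros x Hx. rewrite Rmin_left, Rmax_right in Hx by lra.
        apply continuity_pt_filterlim. apply continuity_pt_minus.
        apply continuity_pt_mult. apply cpt_Rpow; lra. apply cpt_expo, continuity_pt_opp, continuity_pt_id.
        apply continuity_pt_mult. apply continuity_pt_const; intros ? ?; auto.
        apply continuity_pt_filterlim, gf_cont; lra. }
    assert (HS : is_RInt (fun t => s * gf s t) a b (s * RInt (gf s) a b)).
    { apply (@is_RInt_scal R_NormedModule (gf s)). apply (@RInt_correct R_CompleteNormedModule).
      apply ex_RInt_pos; auto. intros; apply gf_cont; auto. }
    assert (HT := @is_RInt_plus R_NormedModule _ _ a b _ _ HI HS).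
    assert (E : RInt (gf (1 + s)) a b = minus (F b) (F a) + s * RInt (gf s) a b).
    { apply is_RInt_unique. eapply is_RInt_ext; [|exact HT].
      intros x Hx. unfold gf, plus; simpl. replace (1 + s - 1) with s by ring. ring. }
    rewrite E. unfold F, minus, plus, opp; simpl.
    assert (RInt (gf s) a b <= Gamma s) by (apply G1; auto).
    pose proof (Rpow_pos b s) as P1. pose proof (exp_pos (-b)) as P2. pose proof (exp_le1 a ltac:(lra)) as P3.
    pose proof (Rpow_pos a s) as P4.
    assert (Rpower a s * exp (- a) <= Rpower a s) by nra.
    nra. }
  apply Rnot_lt_le; intros Hlt.
  set (eta := Gamma (1 + s) - s * Gamma s).
  set (d := Rpower (eta / 2) (/ s)).
  assert (Hd : Rpower d s = eta / 2).
  { unfold d. rewrite Rpower_mult. replace (/ s * s) with 1 by (field; lra). apply Rpower_1. unfold eta; lra. }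
  assert (Hb : Gamma (1 + s) <= eta / 2 + s * Gamma s).
  { apply G2. intros a b Ha Hab.
    apply Rle_trans with (RInt (gf (1 + s)) (Rmin a d) b).
    { apply RInt_mono_dom. intros; apply gf_cont; lra. intros; apply gf_nonneg.
      apply Rmin_glb_lt; auto; apply Rpow_pos. apply Rmin_l. lra. lra. }
    apply Rle_trans with (Rpower (Rmin a d) s + s * Gamma s).
    apply Hint. apply Rmin_glb_lt; auto; apply Rpow_pos. apply Rle_trans with a; auto; apply Rmin_l.
    rewrite <- Hd. apply Rplus_le_compat_r, Rle_Rpower_l. lra. split. apply Rmin_glb_lt; auto; apply Rpow_pos. apply Rmin_r. }
  unfold eta in Hb. lra.
Qed.

Lemma ex_gf c a b : 0 < a -> 0 < b -> ex_RInt (gf c) a b.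
Proof.
  intros Ha Hb. apply (@ex_RInt_continuous R_CompleteNormedModule).
  intros z Hz. apply gf_cont. assert (0 < Rmin a b) by (apply Rmin_glb_lt; auto). lra.
Qed.

Definition G (c x : R) := RInt (gf c) 1 x.

Lemma G_deriv c x : 0 < x -> is_derive (G c) x (gf c x).
Proof.
  intros Hx. apply (@is_derive_RInt R_NormedModule (gf c) (G c) 1 x).
  - exists (mkposreal (x/2) ltac:(lra)). intros y Hy. unfold ball in Hy; simpl in Hy; unfold AbsRing_ball, abs, minus, plus, opp in Hy; simpl in Hy.
    apply Rabs_def2 in Hy. unfold G. apply (@RInt_correct R_CompleteNormedModule). apply ex_gf; lra.
  - apply gf_cont; auto.
Qed.

Lemma G_cont c x : 0 < x -> continuity_pt (G c) x.
Proof.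
  intros Hx. apply continuity_pt_filterlim.
  apply (@ex_derive_continuous R_AbsRing R_NormedModule). eexists; apply G_deriv; auto.
Qed.

Lemma G_chasles c A B : 0 < A -> 0 < B -> RInt (gf c) A B = G c B - G c A.
Proof.
  intros. unfold G. rewrite <- (RInt_Chasles (gf c) 1 A B); try (apply ex_gf; lra).
  unfold plus; simpl. generalize (RInt (gf c) 1 A) (RInt (gf c) A B). intros u v. simpl in u, v. change (v = u + v - u). ring.
Qed.

Lemma Rpower_cancel k p : 0 < k -> Rpower k (- p) * k * Rpower k (p - 1) = 1.
Proof.
  intros Hk. rewrite <- (Rpower_1 k) at 2 by auto. rewrite <- !Rpower_plus.
  replace (- p + 1 + (p - 1)) with 0 by ring. apply Rpower_O; auto.
Qed.

Lemma is_RInt_scaled p k a b : 0 < k -> 0 < a -> 0 < b ->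
  is_RInt (fun y => Rpower y (p - 1) * exp (- (k * y))) a b (Rpower k (- p) * RInt (gf p) (k * a) (k * b)).
Proof.
  intros Hk Ha Hb.
  assert (H0 : is_RInt (gf p) (k * a + 0) (k * b + 0) (RInt (gf p) (k * a) (k * b))).
  { rewrite !Rplus_0_r. apply (@RInt_correct R_CompleteNormedModule). apply ex_gf; nra. }
  assert (H1 := @is_RInt_comp_lin R_NormedModule (gf p) k 0 a b _ H0).
  assert (H2 := @is_RInt_scal R_NormedModule _ a b (Rpower k (- p)) _ H1).
  eapply is_RInt_ext; [| exact H2].
  intros y Hy. assert (0 < Rmin a b) by (apply Rmin_glb_lt; auto).
  assert (Hy0 : 0 < y) by lra.
  unfold scal; simpl; unfold mult; simpl. unfold gf. rewrite Rplus_0_r.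
  rewrite <- Rpower_mult_distr by auto.
  transitivity ((Rpower k (- p) * k * Rpower k (p - 1)) * (Rpower y (p - 1) * exp (- (k * y)))); [ring|].
  rewrite Rpower_cancel by auto. ring.
Qed.

Lemma D1 s u eps R0 : 0 < s -> 0 < u -> 0 < eps -> eps <= R0 ->
  RInt (fun t => Rpower t (s - 1) * exp (- (u * t))) eps R0 <= Gamma s * Rpower u (- s).
Proof.
  intros Hs Hu He HR.
  rewrite (is_RInt_unique _ _ _ _ (is_RInt_scaled s u eps R0 Hu He ltac:(lra))).
  destruct (Gamma_spec s Hs) as [G1 _].
  assert (RInt (gf s) (u * eps) (u * R0) <= Gamma s) by (apply G1; nra).
  pose proof (Rpow_pos u (- s)). nra.
Qed.

Lemma D2 c t alpha beta : 0 < c -> 0 <= t -> 0 < alpha -> alpha <= 1 -> 1 <= beta ->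
  Gamma c * Rpower (1 + t) (- c) <=
  Rpower (1 + t) (- c) * RInt (gf c) (alpha * (1 + t)) (beta * (1 + t)) + Rpower alpha c / c + Mc c / beta.
Proof.
  intros Hc Ht Ha Ha1 Hb.
  set (A := alpha * (1 + t)). set (B := beta * (1 + t)).
  assert (HA : 0 < A) by (unfold A; nra). assert (HAB : A <= B) by (unfold A, B; nra).
  assert (HB1 : 1 <= B) by (unfold B; nra). assert (HBb : beta <= B) by (unfold B; nra).
  destruct (Gamma_spec c Hc) as [_ G2].
  assert (HG : Gamma c <= Rpower A c / c + RInt (gf c) A B + Mc c / B).
  { apply G2. intros; apply gf_int_bound; auto. }
  set (w := Rpower (1 + t) (- c)).
  assert (Hw : 0 < w) by apply Rpow_pos.
  assert (Hw1 : w <= 1).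
  { unfold w. replace 1 with (Rpower (1 + t) 0) at 2 by (apply Rpower_O; lra). apply Rle_Rpower; lra. }
  assert (HwA : w * Rpower A c = Rpower alpha c).
  { unfold w, A. rewrite <- Rpower_mult_distr by lra. rewrite Rpower_Ropp.
    assert (0 < Rpower (1 + t) c) by apply Rpow_pos. field. lra. }
  assert (HM : 0 < Mc c) by apply Rpow_pos.
  assert (w * (Mc c / B) <= Mc c / beta).
  { unfold Rdiv. assert (/ B <= / beta) by (apply Rinv_le_contravar; lra).
    assert (0 < / B) by (apply Rinv_0_lt_compat; lra).
    assert (w * (Mc c * / B) <= 1 * (Mc c * / B)) by (apply Rmult_le_compat_r; nra).
    assert (Mc c * / B <= Mc c * / beta) by (apply Rmult_le_compat_l; lra). lra. }
  assert (Gamma c * w <= w * (Rpower A c / c + RInt (gf c) A B + Mc c / B)).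
  { rewrite Rmult_comm; apply Rmult_le_compat_l; lra. }
  assert (w * (Rpower A c / c) = Rpower alpha c / c) by (rewrite <- HwA; field; lra).
  rewrite !Rmult_plus_distr_l in *. lra.
Qed.

Definition Jf (c alpha b t : R) := Rpower (1 + t) (- c) * (G c (b * (1 + t)) - G c (alpha * (1 + t))).
Definition Fk (s c alpha b t : R) := Rpower t (s - 1) * Jf c alpha b t.
Definition Dk (s c b t : R) := Rpower t (s - 1) * (Rpower (1 + t) (- c) * ((1 + t) * gf c (b * (1 + t)))).

Lemma Fk_deriv s c alpha b t : 0 < b -> 0 <= t ->
  is_derive (fun z => Fk s c alpha z t) b (Dk s c b t).
Proof.
  intros Hb Ht.
  assert (H1 : is_derive (fun z => G c (z * (1 + t))) b (scal (1 + t) (gf c (b * (1 + t))))).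
  { apply (@is_derive_comp R_AbsRing R_NormedModule (G c) (fun z => z * (1 + t))).
    apply G_deriv; nra.
    auto_derive; auto; ring. }
  assert (H2 := @is_derive_minus R_AbsRing R_NormedModule _ (fun _ => G c (alpha * (1 + t))) b _ _ H1 (is_derive_const _ _)).
  assert (H3 := is_derive_scal _ b (Rpower (1 + t) (- c)) _ H2).
  assert (H4 := is_derive_scal _ b (Rpower t (s - 1)) _ H3).
  unfold Fk, Jf, Dk.
  replace (Rpower t (s - 1) * (Rpower (1 + t) (- c) * ((1 + t) * gf c (b * (1 + t)))))
    with (Rpower t (s - 1) * (Rpower (1 + t) (- c) * minus (scal (1 + t) (gf c (b * (1 + t)))) zero)).
  2:{ unfold minus, plus, opp, scal, zero; simpl. unfold mult; simpl. ring. }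
  eapply is_derive_ext; [|exact H4]. intros; reflexivity.
Qed.

Lemma cpt_lin (k d x : R) : continuity_pt (fun t => k * (d + t)) x.
Proof. apply continuity_pt_mult. apply continuity_pt_const; intros ? ?; auto.
  apply continuity_pt_plus. apply continuity_pt_const; intros ? ?; auto. apply continuity_pt_id. Qed.

Lemma Fk_cont_t s c alpha b t : 0 < alpha -> 0 < b -> 0 < t ->
  continuity_pt (fun t => Fk s c alpha b t) t.
Proof.
  intros Ha Hb Ht. unfold Fk, Jf.
  apply continuity_pt_mult. apply cpt_Rpow; auto.
  apply continuity_pt_mult.
  - apply (continuity_pt_comp (fun t => 1 + t) (fun x => Rpower x (- c))).
    apply continuity_pt_plus. apply continuity_pt_const; intros ? ?; auto. apply continuity_pt_id.
    apply cpt_Rpow; lra.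
  - apply continuity_pt_minus.
    + apply (continuity_pt_comp (fun t => b * (1 + t)) (G c)). apply cpt_lin. apply G_cont; nra.
    + apply (continuity_pt_comp (fun t => alpha * (1 + t)) (G c)). apply cpt_lin. apply G_cont; nra.
Qed.

Lemma c2_v (h : R -> R) x y : continuity_pt h y -> continuity_2d_pt (fun _ v => h v) x y.
Proof. intros H. apply (continuity_1d_2d_pt_comp h (fun _ v => v)); auto. apply continuity_2d_pt_id2. Qed.

Lemma Dk_cont2 s c b t : 0 < b -> 0 < t -> continuity_2d_pt (fun u v => Dk s c u v) b t.
Proof.
  intros Hb Ht. unfold Dk.
  apply (continuity_2d_pt_mult (fun _ v => Rpower v (s - 1))). apply c2_v, cpt_Rpow; auto.
  apply (continuity_2d_pt_mult (fun _ v => Rpower (1 + v) (- c))).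
  apply c2_v. apply (continuity_pt_comp (fun t => 1 + t) (fun x => Rpower x (- c))).
    apply continuity_pt_plus. apply continuity_pt_const; intros ? ?; auto. apply continuity_pt_id.
    apply cpt_Rpow; lra.
  apply (continuity_2d_pt_mult (fun _ v => 1 + v)).
  apply c2_v. apply continuity_pt_plus. apply continuity_pt_const; intros ? ?; auto. apply continuity_pt_id.
  apply (continuity_1d_2d_pt_comp (gf c) (fun u v => u * (1 + v))).
  apply continuity_pt_filterlim, gf_cont; nra.
  apply (continuity_2d_pt_mult (fun u _ => u) (fun _ v => 1 + v)). apply continuity_2d_pt_id1.
  apply c2_v. apply continuity_pt_plus. apply continuity_pt_const; intros ? ?; auto. apply continuity_pt_id.
Qed.

Lemma Psi_deriv s c alpha eps R0 b : 0 < alpha -> 0 < eps -> eps <= R0 -> 0 < b ->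
  is_derive (fun z => RInt (fun t => Fk s c alpha z t) eps R0) b (RInt (fun t => Dk s c b t) eps R0).
Proof.
  intros Ha He HR Hb.
  assert (HP := is_derive_RInt_param (fun z t => Fk s c alpha z t) eps R0 b).
  rewrite Rmin_left, Rmax_right in HP by lra.
  assert (HE : RInt (fun t => Derive (fun u => Fk s c alpha u t) b) eps R0 = RInt (fun t => Dk s c b t) eps R0).
  { apply RInt_ext. intros x Hx. rewrite Rmin_left, Rmax_right in Hx by lra.
    apply is_derive_unique, Fk_deriv; lra. }
  rewrite <- HE. apply HP.
  - exists (mkposreal (b/2) ltac:(lra)). intros y Hy. unfold ball in Hy; simpl in Hy; unfold AbsRing_ball, abs, minus, plus, opp in Hy; simpl in Hy.
    apply Rabs_def2 in Hy. intros t Ht. eexists. apply Fk_deriv; lra.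
  - intros t Ht.
    apply (continuity_2d_pt_ext_loc (fun u v => Dk s c u v)); [|apply Dk_cont2; lra].
    exists (mkposreal (Rmin (b/2) (eps/2)) ltac:(apply Rmin_glb_lt; lra)).
    intros u v Hu Hv. simpl in Hu, Hv.
    assert (Rmin (b/2) (eps/2) <= b/2) by apply Rmin_l.
    assert (Rmin (b/2) (eps/2) <= eps/2) by apply Rmin_r.
    apply Rabs_def2 in Hu. apply Rabs_def2 in Hv.
    symmetry; apply is_derive_unique, Fk_deriv; lra.
  - exists (mkposreal (b/2) ltac:(lra)). intros y Hy. unfold ball in Hy; simpl in Hy; unfold AbsRing_ball, abs, minus, plus, opp in Hy; simpl in Hy.
    apply Rabs_def2 in Hy.
    apply (@ex_RInt_continuous R_CompleteNormedModule). intros z Hz.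
    rewrite Rmin_left, Rmax_right in Hz by lra.
    apply continuity_pt_filterlim, Fk_cont_t; lra.
Qed.

Lemma Dk_eq s c b t : 0 < b -> 0 < t ->
  Dk s c b t = (Rpower b (c - 1) * exp (- b)) * (Rpower t (s - 1) * exp (- (b * t))).
Proof.
  intros Hb Ht. unfold Dk, gf.
  rewrite <- Rpower_mult_distr by lra.
  replace (- (b * (1 + t))) with (- b + - (b * t)) by ring. rewrite exp_plus.
  transitivity ((Rpower (1 + t) (- c) * (1 + t) * Rpower (1 + t) (c - 1)) * (Rpower b (c - 1) * exp (- b)) * (Rpower t (s - 1) * exp (- (b * t)))); [ring|].
  rewrite Rpower_cancel by lra. ring.
Qed.

Lemma Dk_bound s c b eps R0 : 0 < s -> 0 < b -> 0 < eps -> eps <= R0 ->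
  RInt (fun t => Dk s c b t) eps R0 <= Gamma s * gf (c - s) b.
Proof.
  intros Hs Hb He HR.
  set (K := Rpower b (c - 1) * exp (- b)).
  assert (HK : 0 < K) by (unfold K; pose proof (Rpow_pos b (c-1)); pose proof (exp_pos (-b)); nra).
  assert (HI := is_RInt_scaled s b eps R0 Hb He ltac:(lra)).
  assert (HI2 := @is_RInt_scal R_NormedModule _ eps R0 K _ HI).
  assert (HI3 : is_RInt (fun t => Dk s c b t) eps R0 (scal K (Rpower b (- s) * RInt (gf s) (b * eps) (b * R0)))).
  { eapply is_RInt_ext; [|exact HI2]. intros x Hx. rewrite Rmin_left, Rmax_right in Hx by lra.
    rewrite Dk_eq by lra. reflexivity. }
  rewrite (is_RInt_unique _ _ _ _ HI3).
  unfold scal; simpl; unfold mult; simpl.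
  destruct (Gamma_spec s Hs) as [G1 _].
  assert (RInt (gf s) (b * eps) (b * R0) <= Gamma s) by (apply G1; nra).
  assert (E : gf (c - s) b = K * Rpower b (- s)).
  { unfold gf, K. replace (c - s - 1) with ((c - 1) + - s) by ring. rewrite Rpower_plus. ring. }
  rewrite E. pose proof (Rpow_pos b (- s)).
  assert (0 < K * Rpower b (- s)) by nra.
  replace (K * (Rpower b (- s) * RInt (gf s) (b * eps) (b * R0))) with ((K * Rpower b (- s)) * RInt (gf s) (b * eps) (b * R0)) by ring.
  rewrite (Rmult_comm (Gamma s)). apply Rmult_le_compat_l; lra.
Qed.

Lemma Fk_same s c alpha t : Fk s c alpha alpha t = 0.
Proof. unfold Fk, Jf. ring. Qed.

Lemma D3 s c alpha beta eps R0 : 0 < s -> s < c -> 0 < alpha -> alpha <= beta -> 0 < eps -> eps <= R0 ->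
  RInt (fun t => Fk s c alpha beta t) eps R0 <= Gamma s * Gamma (c - s).
Proof.
  intros Hs Hsc Ha Hab He HR.
  set (Phi := fun z => RInt (fun t => Fk s c alpha z t) eps R0 - Gamma s * G (c - s) z).
  assert (HD : forall z, 0 < z -> is_derive Phi z (RInt (fun t => Dk s c z t) eps R0 - Gamma s * gf (c - s) z)).
  { intros z Hz. unfold Phi.
    apply (@is_derive_minus R_AbsRing R_NormedModule). apply Psi_deriv; lra.
    apply is_derive_scal, G_deriv; auto. }
  assert (HPa : Phi alpha = - Gamma s * G (c - s) alpha).
  { unfold Phi. rewrite (RInt_ext _ (fun _ => 0)). 2:{ intros; apply Fk_same. }
    rewrite RInt_const. unfold scal; simpl; unfold mult; simpl. ring. }
  assert (Hle : Phi beta <= Phi alpha).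
  { destruct (Req_dec alpha beta) as [<-|Hne]; [lra|].
    destruct (MVT_gen Phi alpha beta (fun z => RInt (fun t => Dk s c z t) eps R0 - Gamma s * gf (c - s) z)) as [xi [Hxi E]].
    - intros x Hx. rewrite Rmin_left, Rmax_right in Hx by lra. apply HD; lra.
    - intros x Hx. rewrite Rmin_left, Rmax_right in Hx by lra.
      apply continuity_pt_filterlim. apply (@ex_derive_continuous R_AbsRing R_NormedModule).
      eexists; apply HD; lra.
    - rewrite Rmin_left, Rmax_right in Hxi by lra.
      assert (RInt (fun t => Dk s c xi t) eps R0 <= Gamma s * gf (c - s) xi) by (apply Dk_bound; lra).
      assert ((RInt (fun t => Dk s c xi t) eps R0 - Gamma s * gf (c - s) xi) * (beta - alpha) <= 0).
      { assert (0 <= beta - alpha) by lra. nra. }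
      lra. }
  rewrite HPa in Hle. unfold Phi in Hle.
  assert (HG : G (c - s) beta - G (c - s) alpha = RInt (gf (c - s)) alpha beta) by (rewrite G_chasles; lra).
  destruct (Gamma_spec (c - s) ltac:(lra)) as [G1 _].
  assert (RInt (gf (c - s)) alpha beta <= Gamma (c - s)) by (apply G1; lra).
  assert (0 < Gamma s) by (apply Gamma_pos; lra).
  assert (Gamma s * (G (c - s) beta - G (c - s) alpha) <= Gamma s * Gamma (c - s)) by (rewrite HG; apply Rmult_le_compat_l; lra).
  lra.
Qed.

Definition bf (s c t : R) := Rpower t (s - 1) / Rpower (t + 1) c.

Lemma bf_cont s c t : 0 < t -> continuity_pt (bf s c) t.
Proof.
  intros Ht. unfold bf. apply continuity_pt_div. apply cpt_Rpow; auto.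
  apply (continuity_pt_comp (fun t => t + 1) (fun x => Rpower x c)).
  apply continuity_pt_plus. apply continuity_pt_id. apply continuity_pt_const; intros ? ?; auto.
  apply cpt_Rpow; lra. pose proof (Rpow_pos (t+1) c); lra.
Qed.

Lemma bf_nonneg s c t : 0 <= bf s c t.
Proof. unfold bf. pose proof (Rpow_pos t (s-1)); pose proof (Rpow_pos (t+1) c).
  apply Rlt_le, Rdiv_lt_0_compat; auto. Qed.

Lemma Beta_pre s c eps R0 alpha beta : 0 < s -> s < c -> 0 < eps -> eps <= R0 -> 0 < alpha -> alpha <= 1 -> 1 <= beta ->
  Gamma c * RInt (bf s c) eps R0 <= Gamma s * Gamma (c - s) + (Rpower alpha c / c + Mc c / beta) * (Rpower R0 s / s).
Proof.
  intros Hs Hsc He HR Ha Ha1 Hb.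
  set (d := Rpower alpha c / c + Mc c / beta).
  assert (Hd : 0 <= d).
  { unfold d. pose proof (Rpow_pos alpha c). pose proof (Rpow_pos (c+1) (c+1)). unfold Mc.
    apply Rplus_le_le_0_compat; apply Rlt_le, Rdiv_lt_0_compat; lra. }
  assert (Hexf : ex_RInt (bf s c) eps R0).
  { apply ex_RInt_pos; [lra|lra|]; intros; apply continuity_pt_filterlim, bf_cont; auto. }
  assert (HF : ex_RInt (fun t => Fk s c alpha beta t) eps R0).
  { apply ex_RInt_pos; [lra|lra|]; intros; apply continuity_pt_filterlim, Fk_cont_t; lra. }
  assert (HP : is_RInt (fun t => Rpower t (s - 1)) eps R0 ((Rpower R0 s - Rpower eps s) / s)).
  { apply is_RInt_pow; lra. }
  assert (H1 : is_RInt (fun t => Gamma c * bf s c t) eps R0 (Gamma c * RInt (bf s c) eps R0)).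
  { apply (@is_RInt_scal R_NormedModule (bf s c)). apply (@RInt_correct R_CompleteNormedModule); auto. }
  assert (H2 : is_RInt (fun t => Fk s c alpha beta t + d * Rpower t (s - 1)) eps R0
                (RInt (fun t => Fk s c alpha beta t) eps R0 + d * ((Rpower R0 s - Rpower eps s) / s))).
  { apply (@is_RInt_plus R_NormedModule). apply (@RInt_correct R_CompleteNormedModule); auto.
    apply (@is_RInt_scal R_NormedModule (fun t => Rpower t (s - 1))); auto. }
  assert (Hle : Gamma c * RInt (bf s c) eps R0 <= RInt (fun t => Fk s c alpha beta t) eps R0 + d * ((Rpower R0 s - Rpower eps s) / s)).
  { rewrite <- (is_RInt_unique _ _ _ _ H1), <- (is_RInt_unique _ _ _ _ H2).
    apply RInt_le; auto. eexists; exact H1. eexists; exact H2.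
    intros t Ht.
    assert (HD2 := D2 c t alpha beta ltac:(lra) ltac:(lra) Ha Ha1 Hb).
    rewrite G_chasles in HD2 by nra.
    unfold Fk, Jf, bf. fold d in HD2.
    replace (Rpower t (s - 1) / Rpower (t + 1) c) with (Rpower t (s - 1) * Rpower (1 + t) (- c)).
    2:{ rewrite Rpower_Ropp. rewrite (Rplus_comm 1 t). field. pose proof (Rpow_pos (t+1) c); lra. }
    pose proof (Rpow_pos t (s - 1)).
    assert (H3 : Rpower t (s - 1) * (Gamma c * Rpower (1 + t) (- c)) <= Rpower t (s - 1) * (Rpower (1 + t) (- c) * (G c (beta * (1 + t)) - G c (alpha * (1 + t))) + d)).
    { apply Rmult_le_compat_l; [lra|]. unfold d; lra. }
    eapply Rle_trans; [|eapply Rle_trans; [exact H3|]]; right; ring. }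
  assert (HD3 := D3 s c alpha beta eps R0 Hs Hsc Ha ltac:(lra) He HR).
  pose proof (Rpow_pos eps s).
  assert (d * ((Rpower R0 s - Rpower eps s) / s) <= d * (Rpower R0 s / s)).
  { apply Rmult_le_compat_l; auto. unfold Rdiv. apply Rmult_le_compat_r. left; apply Rinv_0_lt_compat; lra. lra. }
  lra.
Qed.

Lemma Beta_fin s c eps R0 : 0 < s -> s < c -> 0 < eps -> eps <= R0 ->
  Gamma c * RInt (bf s c) eps R0 <= Gamma s * Gamma (c - s).
Proof.
  intros Hs Hsc He HR.
  assert (Hc : 0 < c) by lra.
  set (X := Gamma c * RInt (bf s c) eps R0).
  set (Y := Gamma s * Gamma (c - s)).
  set (P := Rpower R0 s / s).
  assert (HP : 0 < P) by (unfold P; apply Rdiv_lt_0_compat; [apply Rpow_pos|lra]).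
  assert (Hall : forall eta, 0 < eta -> X <= Y + 2 * eta * P).
  { intros eta Heta.
    set (alpha := Rmin 1 (Rpower (c * eta) (/ c))).
    set (beta := Rmax 1 (Mc c / eta)).
    assert (Ha : 0 < alpha) by (unfold alpha; apply Rmin_glb_lt; [lra|apply Rpow_pos]).
    assert (Ha1 : alpha <= 1) by apply Rmin_l.
    assert (Hb : 1 <= beta) by apply Rmax_l.
    assert (Hac : Rpower alpha c / c <= eta).
    { assert (Rpower alpha c <= Rpower (Rpower (c * eta) (/ c)) c).
      { apply Rle_Rpower_l; [lra|]. split; auto. apply Rmin_r. }
      rewrite Rpower_mult in H. replace (/ c * c) with 1 in H by (field; lra).
      rewrite Rpower_1 in H by nra.
      apply (Rmult_le_reg_r c); [lra|]. unfold Rdiv. rewrite Rmult_assoc, Rinv_l by lra. lra. }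
    assert (Hbc : Mc c / beta <= eta).
    { assert (HM : 0 < Mc c) by apply Rpow_pos.
      assert (Mc c / eta <= beta) by apply Rmax_r.
      assert (0 < beta) by lra.
      apply (Rmult_le_reg_r beta); auto. unfold Rdiv. rewrite Rmult_assoc, Rinv_l by lra.
      apply (Rmult_le_reg_r (/ eta)). apply Rinv_0_lt_compat; auto.
      replace (eta * beta * / eta) with beta by (field; lra). lra. }
    assert (HB := Beta_pre s c eps R0 alpha beta Hs Hsc He HR Ha Ha1 Hb).
    fold X Y P in HB.
    assert ((Rpower alpha c / c + Mc c / beta) * P <= (2 * eta) * P) by (apply Rmult_le_compat_r; lra).
    lra. }
  apply Rnot_lt_le; intros Hlt.
  assert (H := Hall ((X - Y) / (4 * P)) ltac:(apply Rdiv_lt_0_compat; lra)).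
  assert (2 * ((X - Y) / (4 * P)) * P = (X - Y) / 2) by (field; lra).
  lra.
Qed.

Lemma bf_le s c t : 0 <= c -> 0 < t -> bf s c t <= Rpower t (s - 1).
Proof.
  intros Hc Ht. unfold bf. pose proof (Rpow_pos t (s-1)).
  assert (1 <= Rpower (t + 1) c).
  { replace 1 with (Rpower (t + 1) 0) at 1 by (apply Rpower_O; lra). apply Rle_Rpower; lra. }
  unfold Rdiv. rewrite <- (Rmult_1_r (Rpower t (s-1))) at 2. apply Rmult_le_compat_l; [lra|].
  assert (HH : / Rpower (t + 1) c <= / 1) by (apply Rinv_le_contravar; lra).
  rewrite Rinv_1 in HH. exact HH.
Qed.

Lemma green_int_bounds s c Rs : 0 < s -> s < c -> 0 < Rs ->
  let V := RInt_gen (fun t => Rpower t (s - 1) / Rpower (t + 1) c) (at_right 0) (at_point Rs) in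
  0 <= V /\ V <= Rpower Rs s / s /\ Gamma c * V <= Gamma s * Gamma (c - s).
Proof.
  intros Hs Hsc HRs V.
  assert (Hcont : forall t, 0 < t -> continuous (bf s c) t) by (intros; apply continuity_pt_filterlim, bf_cont; auto).
  assert (Hnn : forall t, 0 < t -> 0 <= bf s c t) by (intros; apply bf_nonneg).
  assert (Hbd : forall a, 0 < a -> a <= Rs -> RInt (bf s c) a Rs <= Rpower Rs s / s).
  { intros a Ha HaR.
    apply Rle_trans with (RInt (fun t => Rpower t (s - 1)) a Rs).
    apply RInt_le; auto. apply (exg _ Hcont); auto. apply ex_RInt_pos; auto. intros; apply Rpow_cont; auto.
    intros; apply bf_le; lra.
    rewrite RInt_pow by lra. pose proof (Rpow_pos a s). unfold Rdiv. apply Rmult_le_compat_r.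
    left; apply Rinv_0_lt_compat; lra. lra. }
  destruct (improper_pt (bf s c) Hcont Hnn Rs _ HRs Hbd) as [L [HL [H1 H2]]].
  assert (HV : V = L).
  { unfold V. apply (@is_RInt_gen_unique R_CompleteNormedModule (at_right 0) (at_point Rs)
      (Proper_StrongProper _ (at_right_proper_filter 0)) (Proper_StrongProper _ (at_point_filter Rs)) (bf s c) L HL). }
  rewrite HV. split; [|split].
  - apply Rle_trans with (RInt (bf s c) Rs Rs). rewrite RInt_point. right; reflexivity. apply H1; lra.
  - apply H2; auto.
  - assert (HG : 0 < Gamma c) by (apply Gamma_pos; lra).
    assert (L <= Gamma s * Gamma (c - s) / Gamma c).
    { apply H2. intros a Ha HaR. apply (Rmult_le_reg_l (Gamma c)); auto.
      replace (Gamma c * (Gamma s * Gamma (c - s) / Gamma c)) with (Gamma s * Gamma (c - s)) by (field; lra).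
      apply Beta_fin; lra. }
    apply (Rmult_le_compat_l (Gamma c)) in H; [|lra].
    replace (Gamma c * (Gamma s * Gamma (c - s) / Gamma c)) with (Gamma s * Gamma (c - s)) in H by (field; lra).
    exact H.
Qed.

Definition Sq (l : list R) := fold_right (fun a acc => a * a + acc) 0 l.
Fixpoint dotl (u v : list R) : R :=
  match u, v with a :: u', b :: v' => a * b + dotl u' v' | _, _ => 0 end.

Lemma Sq_nonneg l : 0 <= Sq l.
Proof. induction l; simpl; nra. Qed.

Lemma vsub_cons a x b y : vsub (a :: x) (b :: y) = (a - b) :: vsub x y.
Proof. reflexivity. Qed.

Lemma cs_step A B d b w : 0 <= A -> 0 <= B -> d * d <= A * B ->
  (b * w + d) * (b * w + d) <= (b * b + A) * (w * w + B).
Proof.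
  intros HA HB Hd.
  assert (2 * b * w * d <= b * b * B + w * w * A).
  { destruct (Req_dec B 0) as [->|HB0].
    - assert (d = 0) by nra. subst. nra.
    - assert (HBp : 0 < B) by lra.
      assert (B * (b * b * B + w * w * A - 2 * b * w * d) >= 0).
      { assert (B * (b * b * B + w * w * A - 2 * b * w * d) = (b * B - w * d) * (b * B - w * d) + w * w * (A * B - d * d)) by ring.
        assert (0 <= w * w * (A * B - d * d)) by (apply Rmult_le_pos; [pose proof (Rle_0_sqr w) as HS; unfold Rsqr in HS|]; lra).
        pose proof (Rle_0_sqr (b * B - w * d)) as HS. unfold Rsqr in HS. lra. }
      apply Rmult_le_reg_l with B; auto. lra. }
  nra.
Qed.

Lemma tri_id x y : length x = length y ->
  Sq x = Sq y + Sq (vsub x y) + 2 * dotl y (vsub x y) /\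
  dotl y (vsub x y) * dotl y (vsub x y) <= Sq y * Sq (vsub x y).
Proof.
  revert y; induction x as [|a x IH]; intros [|b y] Hl; simpl in Hl; try discriminate.
  - simpl. split; lra.
  - injection Hl as Hl. destruct (IH y Hl) as [E C].
    rewrite vsub_cons. simpl. fold (Sq x) (Sq y) (Sq (vsub x y)).
    split. rewrite E. ring.
    apply cs_step; auto using Sq_nonneg.
Qed.

Lemma vnorm_nonneg x : 0 <= vnorm x.
Proof. apply sqrt_pos. Qed.

Lemma vnorm_tri x y : length x = length y -> vnorm x <= vnorm y + vnorm (vsub x y).
Proof.
  intros Hl. destruct (tri_id x y Hl) as [E C].
  unfold vnorm. fold (Sq x) (Sq y) (Sq (vsub x y)).
  set (D := dotl y (vsub x y)) in *.
  set (A := Sq y) in *. set (B := Sq (vsub x y)) in *.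
  assert (HA : 0 <= A) by apply Sq_nonneg. assert (HB : 0 <= B) by apply Sq_nonneg.
  pose proof (sqrt_pos A). pose proof (sqrt_pos B).
  pose proof (sqrt_sqrt A HA) as SA. pose proof (sqrt_sqrt B HB) as SB.
  assert (HD : D <= sqrt A * sqrt B).
  { destruct (Rle_dec D 0). nra.
    assert ((sqrt A * sqrt B) * (sqrt A * sqrt B) = A * B).
    { transitivity ((sqrt A * sqrt A) * (sqrt B * sqrt B)); [ring|]. rewrite SA, SB; ring. }
    assert (0 <= sqrt A * sqrt B) by (apply Rmult_le_pos; lra). nra. }
  rewrite <- (sqrt_square (sqrt A + sqrt B)) by lra.
  apply sqrt_le_1_alt. rewrite E. nra.
Qed.

Lemma vsub_zero x y : length x = length y -> Sq (vsub x y) = 0 -> x = y.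
Proof.
  revert y; induction x as [|a x IH]; intros [|b y] Hl H; simpl in Hl; try discriminate; auto.
  injection Hl as Hl. rewrite vsub_cons in H. simpl in H. fold (Sq (vsub x y)) in H.
  pose proof (Sq_nonneg (vsub x y)).
  assert (a - b = 0) by nra. assert (Sq (vsub x y) = 0) by nra.
  f_equal. lra. apply IH; auto.
Qed.

Lemma vnorm_sub_pos x y : length x = length y -> x <> y -> 0 < vnorm (vsub x y).
Proof.
  intros Hl Hne. unfold vnorm. fold (Sq (vsub x y)). apply sqrt_lt_R0.
  pose proof (Sq_nonneg (vsub x y)). destruct (Req_dec (Sq (vsub x y)) 0); [|lra].
  exfalso; apply Hne, vsub_zero; auto.
Qed.

Lemma Rpower_minus z a b : Rpower z (a - b) = Rpower z a / Rpower z b.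
Proof. unfold Rminus. rewrite Rpower_plus, Rpower_Ropp. reflexivity. Qed.

Lemma Rpower_inv_base z a : 0 < z -> Rpower (/ z) a = / Rpower z a.
Proof. intros Hz. unfold Rpower. rewrite ln_Rinv by auto. rewrite <- exp_Ropp. f_equal. ring. Qed.

Lemma Rpower_4 s : Rpower 4 s = Rpower 2 (2 * s).
Proof.
  replace 4 with (2 * 2) by ring. rewrite <- Rpower_mult_distr by lra.
  rewrite <- Rpower_plus. f_equal; ring.
Qed.

Lemma Rpow_mono a b e : 0 <= e -> 0 < a -> a <= b -> Rpower a e <= Rpower b e.
Proof. intros; apply Rle_Rpower_l; auto. Qed.

Lemma rstar_bound r X Y rho : 0 < r -> 0 <= X -> X < r -> 0 <= Y -> Y < r -> 0 < rho ->
  0 < (r ^ 2 - X ^ 2) * (r ^ 2 - Y ^ 2) / (r ^ 2 * rho ^ 2) /\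
  (r ^ 2 - X ^ 2) * (r ^ 2 - Y ^ 2) / (r ^ 2 * rho ^ 2) <= 4 * (r - X) * (r - Y) * / rho * / rho.
Proof.
  intros Hr HX HXr HY HYr Hrho.
  assert (H1 : 0 < r ^ 2 - X ^ 2) by nra. assert (H2 : 0 < r ^ 2 - Y ^ 2) by nra.
  assert (H3 : 0 < r ^ 2 * rho ^ 2) by (apply Rmult_lt_0_compat; apply pow_lt; lra).
  split. apply Rdiv_lt_0_compat; nra.
  assert (E : 4 * (r - X) * (r - Y) * / rho * / rho = (4 * r ^ 2 * (r - X) * (r - Y)) / (r ^ 2 * rho ^ 2)) by (field; lra).
  rewrite E. unfold Rdiv. apply Rmult_le_compat_r. left; apply Rinv_0_lt_compat; auto.
  assert (r ^ 2 - X ^ 2 <= 2 * r * (r - X)) by nra.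
  assert (r ^ 2 - Y ^ 2 <= 2 * r * (r - Y)) by nra.
  assert ((r ^ 2 - X ^ 2) * (r ^ 2 - Y ^ 2) <= (2 * r * (r - X)) * (2 * r * (r - Y))).
  { apply Rmult_le_compat; lra. }
  nra.
Qed.

Ltac pos := repeat (apply Rmult_lt_0_compat || apply Rdiv_lt_0_compat || apply Rinv_0_lt_compat); auto; try lra.

Theorem lemma4p3 (n : nat) (s r s1 : R) (x y : list R) :
  (2 <= n)%nat -> 0 < s < 1 -> 0 < r -> 0 < s1 < 2 * s ->
  length x = n -> length y = n -> vnorm x < r -> vnorm y < r -> x <> y ->
  green_ball n s r x y <=
  C4 n s * Rpower (r - vnorm x) s *
  (Rpower (r - vnorm y) (s - s1) / Rpower (vnorm (vsub x y)) (INR n - s1)).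
Proof.
  intros Hn Hs Hr Hs1 Hlx Hly Hx Hy Hxy.
  assert (HnR : 2 <= INR n) by (replace 2 with (INR 2) by (simpl; ring); apply le_INR; auto).
  unfold green_ball, kappa, C4, rstar.
  set (c := INR n / 2).
  assert (Hc : 1 <= c) by (unfold c; lra).
  assert (HnE : INR n = 2 * c) by (unfold c; field).
  set (X := vnorm x) in *. set (Y := vnorm y) in *. set (rho := vnorm (vsub x y)) in *.
  assert (HX0 : 0 <= X) by apply vnorm_nonneg. assert (HY0 : 0 <= Y) by apply vnorm_nonneg.
  assert (Hrho : 0 < rho) by (apply vnorm_sub_pos; congruence).
  assert (Htri : X <= Y + rho) by (apply vnorm_tri; congruence).
  set (dx := r - X). set (dy := r - Y).
  assert (Hdx : 0 < dx) by (unfold dx; lra). assert (Hdy : 0 < dy) by (unfold dy; lra).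
  assert (Hdxy : dy <= dx + rho) by (unfold dx, dy; lra).
  destruct (rstar_bound r X Y rho Hr HX0 Hx HY0 Hy Hrho) as [HRs0 HRs1].
  set (Rs := (r ^ 2 - X ^ 2) * (r ^ 2 - Y ^ 2) / (r ^ 2 * rho ^ 2)) in *.
  destruct (green_int_bounds s c Rs ltac:(lra) ltac:(lra) HRs0) as [HV0 [HV1 HV2]].
  set (V := RInt_gen (fun t => Rpower t (s - 1) / Rpower (t + 1) c) (at_right 0) (at_point Rs)) in *.
  set (gN := Gamma c). set (g1 := Gamma s). set (gS := Gamma (1 + s)). set (gB := Gamma (c - s)).
  assert (HgN : 0 < gN) by (apply Gamma_pos; lra).
  assert (Hg1 : 0 < g1) by (apply Gamma_pos; lra).
  assert (HgS : 0 < gS) by (apply Gamma_pos; lra).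
  assert (HgB : 0 < gB) by (apply Gamma_pos; lra).
  assert (HgSle : gS <= s * g1) by (apply Gamma_rec_le; lra).
  set (Q := Rpower 2 (2 * s)). set (Pi := Rpower PI c).
  assert (HQ : 0 < Q) by apply Rpow_pos. assert (HPi : 0 < Pi) by apply Rpow_pos.
  set (rs := Rpower rho s). set (rn := Rpower rho (INR n)). set (r1 := Rpower rho s1).
  set (xs := Rpower dx s). set (ys := Rpower dy s). set (y1 := Rpower dy s1).
  assert (Hrs : 0 < rs) by apply Rpow_pos. assert (Hrn : 0 < rn) by apply Rpow_pos.
  assert (Hr1 : 0 < r1) by apply Rpow_pos. assert (Hxs : 0 < xs) by apply Rpow_pos.
  assert (Hys : 0 < ys) by apply Rpow_pos. assert (Hy1 : 0 < y1) by apply Rpow_pos.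
  assert (E1 : Rpower rho (2 * s - INR n) = rs * rs / rn).
  { replace (2 * s - INR n) with (s + s - INR n) by ring. rewrite Rpower_minus, Rpower_plus. reflexivity. }
  assert (E2 : Rpower dy (s - s1) = ys / y1) by apply Rpower_minus.
  assert (E3 : Rpower rho (INR n - s1) = rn / r1) by apply Rpower_minus.
  rewrite E1, E2, E3. fold xs.
  set (K := gN / (Q * Pi * g1 ^ 2) * (rs * rs / rn)).
  assert (HK : 0 < K).
  { unfold K. apply Rmult_lt_0_compat; apply Rdiv_lt_0_compat; try nra.
    apply Rmult_lt_0_compat; [nra|]. apply pow_lt; auto. }
  replace (gN / (Q * Pi * g1 ^ 2) * (rs * rs / rn) * V) with (K * V) by (unfold K; ring).
  set (W := / Pi / g1 * xs * (ys / y1 / (rn / r1))).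
  assert (HW : 0 < W).
  { unfold W. apply Rmult_lt_0_compat. apply Rmult_lt_0_compat. apply Rmult_lt_0_compat;
    apply Rinv_0_lt_compat; auto. auto. apply Rdiv_lt_0_compat; apply Rdiv_lt_0_compat; auto. }
  replace (/ Pi / g1 * Rmax (Q * gN / gS) gB * xs * (ys / y1 / (rn / r1))) with (Rmax (Q * gN / gS) gB * W) by (unfold W; ring).
  destruct (Rle_lt_dec dy (2 * rho)) as [Hcase|Hcase].
  -
    apply Rle_trans with (K * (Rpower Rs s / s)). apply Rmult_le_compat_l; lra.
    assert (HRp : Rpower Rs s <= Q * xs * ys / (rs * rs)).
    { eapply Rle_trans. apply Rpow_mono; [lra|exact HRs0|exact HRs1].
      assert (Hi : 0 < / rho) by (apply Rinv_0_lt_compat; lra).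
      assert (P1 : 0 < 4 * dx) by lra.
      assert (P2 : 0 < 4 * dx * dy) by (apply Rmult_lt_0_compat; lra).
      assert (P3 : 0 < 4 * dx * dy * / rho) by (apply Rmult_lt_0_compat; lra).
      rewrite <- (Rpower_mult_distr (4 * dx * dy * / rho)) by (auto || lra).
      rewrite <- (Rpower_mult_distr (4 * dx * dy)) by (auto || lra).
      rewrite <- (Rpower_mult_distr (4 * dx)) by (auto || lra).
      rewrite <- (Rpower_mult_distr 4) by (auto || lra).
      rewrite !Rpower_inv_base by lra. rewrite Rpower_4. fold Q xs ys rs. right; field; lra. }
    apply Rle_trans with (K * (Q * xs * ys / (rs * rs) / s)).
    { apply Rmult_le_compat_l; [lra|]. unfold Rdiv at 1 3. apply Rmult_le_compat_r; [left; apply Rinv_0_lt_compat; lra|]. exact HRp. }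
    apply Rle_trans with (Q * gN / gS * W); [|apply Rmult_le_compat_r; [lra|apply Rmax_l]].
    assert (Hy1b : y1 <= Q * r1).
    { apply Rle_trans with (Rpower (2 * rho) s1). apply Rpow_mono; lra.
      rewrite <- Rpower_mult_distr by lra. fold r1. apply Rmult_le_compat_r; [lra|].
      apply Rle_Rpower; lra. }
    assert (E : K * (Q * xs * ys / (rs * rs) / s) = (gN * xs * ys / (Pi * g1 * rn)) * / (g1 * s)).
    { unfold K. field. repeat split; lra. }
    assert (E' : Q * gN / gS * W = (gN * xs * ys / (Pi * g1 * rn)) * (Q * r1 / (gS * y1))).
    { unfold W. field. repeat split; lra. }
    rewrite E, E'. apply Rmult_le_compat_l.
    { apply Rlt_le; pos. }
    assert (Q * r1 / (gS * y1) - / (g1 * s) = (Q * r1 * g1 * s - gS * y1) / (gS * y1 * g1 * s)) by (field; repeat split; lra).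
    assert (0 <= (Q * r1 * g1 * s - gS * y1) / (gS * y1 * g1 * s)).
    { apply Rdiv_le_0_compat. 2:{ pos. }
      assert (gS * y1 <= (s * g1) * (Q * r1)) by (apply Rmult_le_compat; lra). nra. }
    lra.
  -
    apply Rle_trans with (K * (g1 * gB / gN)).
    { apply Rmult_le_compat_l; [lra|]. apply (Rmult_le_reg_l gN); auto.
      replace (gN * (g1 * gB / gN)) with (g1 * gB) by (field; lra). exact HV2. }
    apply Rle_trans with (gB * W); [|apply Rmult_le_compat_r; [lra|apply Rmax_r]].
    set (t2 := Rpower 2 s).
    assert (Ht2 : 1 <= t2).
    { unfold t2. replace 1 with (Rpower 2 0) by (apply Rpower_O; lra). apply Rle_Rpower; lra. }
    assert (HQt : Q = t2 * t2) by (unfold Q, t2; rewrite <- Rpower_plus; f_equal; ring).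
    assert (Hxs2 : ys / t2 <= xs).
    { apply Rle_trans with (Rpower (dy * / 2) s).
      rewrite <- Rpower_mult_distr by lra. rewrite Rpower_inv_base by lra. right; unfold Rdiv; fold ys t2; ring.
      apply Rpow_mono; lra. }
    assert (Hyy : rs * rs / r1 <= ys * ys / y1).
    { assert (Rpower rho (s + s - s1) <= Rpower dy (s + s - s1)) by (apply Rpow_mono; lra).
      rewrite !Rpower_minus, !Rpower_plus in H. exact H. }
    assert (E : K * (g1 * gB / gN) = (gB / (Pi * g1 * rn)) * (rs * rs / Q)).
    { unfold K. field. repeat split; lra. }
    assert (E' : gB * W = (gB / (Pi * g1 * rn)) * (xs * ys * r1 / y1)).
    { unfold W. field. repeat split; lra. }
    rewrite E, E'. apply Rmult_le_compat_l.
    { apply Rlt_le; pos. }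
    assert (A1 : rs * rs / Q <= rs * rs / t2).
    { unfold Rdiv. apply Rmult_le_compat_l. nra. apply Rinv_le_contravar. lra. rewrite HQt. nra. }
    assert (A2 : rs * rs / t2 <= (ys * ys / y1) * r1 / t2).
    { unfold Rdiv. apply Rmult_le_compat_r. left; apply Rinv_0_lt_compat; lra.
      replace (rs * rs) with (rs * rs / r1 * r1) by (field; lra).
      apply Rmult_le_compat_r; lra. }
    assert (A3 : (ys * ys / y1) * r1 / t2 = (ys / t2) * ys * r1 / y1) by (field; lra).
    assert (A4 : (ys / t2) * ys * r1 / y1 <= xs * ys * r1 / y1).
    { unfold Rdiv. apply Rmult_le_compat_r. left; apply Rinv_0_lt_compat; lra.
      apply Rmult_le_compat_r; [lra|]. apply Rmult_le_compat_r; lra. }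
    lra.
Qed.
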